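(* Consider an ROS system with $n$ bidders in the smooth limit, and let $\phi$ be the flow of the differential equation $\frac{dm_i}{dt}=U_i(m)$, $i=1,\dots,n$. Then the set $[1,\infty)^n\subset\mathbb R^n$ is positively invariant with respect to $\phi$, i.e. $\phi(t,[1,\infty)^n)\subseteq[1,\infty)^n$ for all $t\ge 0$.
   Context: ROS system: $n$ bidders, $k$ items; bidder $i$ uses multiplier $m_i$ and bids $b_{ij}=m_iv_{ij}$ on item $j$. Each item is sold by a second-price auction with uniform random tie-breaking: the highest bid wins (ties split uniformly), allocation $x_{ij}\in[0,1]$ is the winning probability and payment $p_{ij}=x_{ij}\max_{s\ne i}b_{sj}$. Smooth limit: the valuation vector $v=(v_{ij})$ is random with a positive $C^1$ density on a box $[0,M]^{nk}$ and $U_i(m)=\mathbb E[\sum_j v_{ij}x_{ij}(m)-p_{ij}(m)]$, which is a $C^1$ function of $m$. A set $S$ is positively invariant for a flow $\phi$ if $\phi(t,S)\subseteq S$ for all $t\ge 0$. *)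

(* Defs.v *)
From HB Require Import structures.
From mathcomp Require Import all_boot all_order all_algebra.
From mathcomp Require Import all_classical all_reals all_analysis.
Set Implicit Arguments. Unset Strict Implicit. Unset Printing Implicit Defensive.
Import Order.TTheory GRing.Theory Num.Theory.
Import numFieldNormedType.Exports.
Local Open Scope classical_set_scope.
Local Open Scope ring_scope.

Section ROS.
Variables (R : realType) (n k : nat).

(* multiplier profile m : 'I_n -> R ; valuation profile v : 'M[R]_(n,k) *)

Definition bid (m : 'I_n -> R) (v : 'M[R]_(n, k)) (i : 'I_n) (j : 'I_k) : R :=
  m i * v i j.

(* highest competing bid max_{s <> i} b_{sj} (0 if there is no competitor) *)
Definition max_other (m : 'I_n -> R) (v : 'M[R]_(n, k)) (i : 'I_n) (j : 'I_k) : R :=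
  \big[Num.max/0]_(s | s != i) bid m v s j.

Definition is_winner (m : 'I_n -> R) (v : 'M[R]_(n, k)) (i : 'I_n) (j : 'I_k) : bool :=
  [forall s, bid m v s j <= bid m v i j].

(* allocation with uniform random tie-breaking: winning probability *)
Definition alloc (m : 'I_n -> R) (v : 'M[R]_(n, k)) (i : 'I_n) (j : 'I_k) : R :=
  if is_winner m v i j
  then (#|[set s | is_winner m v s j]|%:R)^-1 else 0.

Definition payment (m : 'I_n -> R) (v : 'M[R]_(n, k)) (i : 'I_n) (j : 'I_k) : R :=
  alloc m v i j * max_other m v i j.

Definition realized_utility (m : 'I_n -> R) (v : 'M[R]_(n, k)) (i : 'I_n) : R :=
  \sum_(j < k) (v i j * alloc m v i j - payment m v i j).

Definition upd_entry (v : 'M[R]_(n, k)) (ab : 'I_n * 'I_k) (x : R) : 'M[R]_(n, k) :=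
  \matrix_(a, b) if (a, b) == ab then x else v a b.

Fixpoint iter_integral (M : R) (s : seq ('I_n * 'I_k))
    (F : 'M[R]_(n, k) -> R) (v : 'M[R]_(n, k)) : R :=
  match s with
  | [::] => F v
  | ab :: s' =>
      Rintegral lebesgue_measure `[0, M]%classic
        (fun x => iter_integral M s' F (upd_entry v ab x))
  end.

Definition box_integral (M : R) (F : 'M[R]_(n, k) -> R) : R :=
  iter_integral M (enum [set: 'I_n * 'I_k]) F 0.

(* f is a probability density on [0,M]^{nk} that is positive and C^1 there
   (f is C^1 on all of R^{nk}: all partial derivatives exist and are continuous) *)
Definition positive_C1_density (M : R) (f : 'M[R]_(n, k) -> R) : Prop :=
  [/\ forall v : 'M[R]_(n, k), (forall i j, 0 <= v i j <= M) -> 0 < f v,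
      forall (i : 'I_n) (j : 'I_k) (v : 'M[R]_(n, k)),
        derivable f v (delta_mx i j),
      forall (i : 'I_n) (j : 'I_k),
        continuous (fun v : 'M[R]_(n, k) => 'D_(delta_mx i j) f v)
    & box_integral M f = 1].

Definition exp_utility (M : R) (f : 'M[R]_(n, k) -> R) (m : 'I_n -> R) (i : 'I_n) : R :=
  box_integral M (fun v => realized_utility m v i * f v).

Definition ge1_orthant : set ('I_n -> R) := [set x | forall i, 1 <= x i].

End ROS.

(* Main.v *)
Require Import Defs.
From HB Require Import structures.
From mathcomp Require Import all_boot all_order all_algebra.
From mathcomp Require Import all_classical all_reals all_analysis.
Import Order.TTheory GRing.Theory Num.Theory.
Import numFieldNormedType.Exports.
Local Open Scope classical_set_scope.
Local Open Scope ring_scope.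

Lemma util_ge0 (R : realType) (n k : nat) (m : 'I_n -> R) (v : 'M[R]_(n, k)) i :
  m i <= 1 -> (forall a b, 0 <= v a b) -> 0 <= realized_utility m v i.
Proof.
move=> mi1 v0; rewrite /realized_utility; apply: sumr_ge0 => j _.
rewrite /payment mulrC -mulrBr; rewrite /alloc.
case: ifP => [/forallP W|_]; last by rewrite mul0r.
apply: mulr_ge0; first by rewrite invr_ge0 ler0n.
rewrite subr_ge0 /max_other.
have bv : bid m v i j <= v i j.
  by rewrite /bid -[X in _ <= X]mul1r ler_wpM2r.
apply: (le_trans (y := Num.max 0 (bid m v i j))); last by rewrite ge_max v0 bv.
apply: bigmax_le => [|s _]; first by rewrite le_max lexx.
by rewrite le_max W orbT.
Qed.

Lemma iter_ge0 (R : realType) (n k : nat) (M : R) (F : 'M[R]_(n, k) -> R) :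
  (forall w : 'M[R]_(n, k), (forall a b, 0 <= w a b <= M) -> 0 <= F w) ->
  forall s (v : 'M[R]_(n, k)), (forall a b, 0 <= v a b <= M) -> 0 <= iter_integral M s F v.
Proof.
move=> F0 s; elim: s => [|ab s IH] v vB /=; first exact: F0.
apply: Rintegral_ge0 => x; rewrite /= in_itv /= => /andP[x0 xM]; apply: IH => a b.
rewrite /upd_entry mxE; case: ifP => _ //; by rewrite x0 xM.
Qed.

Lemma U_ge0 (R : realType) (n k : nat) (M : R) (f : 'M[R]_(n, k) -> R) m i :
  0 < M -> positive_C1_density M f -> m i <= 1 -> 0 <= exp_utility M f m i.
Proof.
move=> M0 [fpos _ _ _] mi1; rewrite /exp_utility /box_integral.
apply: iter_ge0; last by move=> a b; rewrite mxE lexx ltW.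
move=> w wB; apply: mulr_ge0; last exact/ltW/fpos.
by apply: util_ge0 => // a b; case/andP: (wB a b).
Qed.

Theorem lemma2 (R : realType) (n k : nat) (M : R) (f : 'M[R]_(n, k) -> R)
    (phi : R -> ('I_n -> R) -> ('I_n -> R)) :
  0 < M ->
  positive_C1_density M f ->
  (* phi is the (forward) flow of dm_i/dt = U_i(m) *)
  (forall x : 'I_n -> R, phi 0 x = x) ->
  (forall (x : 'I_n -> R) (i : 'I_n),
      (fun t => phi t x i) @ 0^'+ --> x i) ->
  (forall (x : 'I_n -> R) (i : 'I_n) (t : R), 0 < t ->
      derivable (fun s => phi s x i) t 1 /\
      derive1 (fun s => phi s x i) t = exp_utility M f (phi t x) i) ->
  forall t : R, 0 <= t -> phi t @` @ge1_orthant R n `<=` @ge1_orthant R n.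
Proof.
move=> M0 fD H0 Hr Hd t t0 _ [x xO <-] i.
set g := fun s => phi s x i.
have g0 : g 0 = x i by rewrite /g H0.
have Dg : forall s, 0 < s -> derivable g s 1 by move=> s /(Hd x i)[].
have Cg : forall s : R, 0 < s -> g @ s --> g s.
  by move=> s s0; apply/differentiable_continuous; rewrite -derivable1_diffP; exact: Dg.
have Crg : forall s : R, 0 <= s -> g @ s^'+ --> g s.
  move=> s; rewrite le_eqVlt => /orP[/eqP<-|s0]; first by rewrite g0; exact: Hr.
  exact/cvg_at_right_filter/Cg.
have Mono : forall a b, 0 < a -> a <= b -> (forall u, a <= u <= b -> g u < 1) -> g a <= g b.
  move=> a b a0 ab Hu.
  apply: (@ger0_derive1_ndecr _ g a b) => //.
  - move=> u; rewrite in_itv /= => /andP[au _]; apply: Dg; exact: lt_trans au.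
  - move=> u; rewrite in_itv /= => /andP[au ub].
    have u0 : 0 < u by exact: lt_trans au.
    rewrite (proj2 (Hd x i u u0)); apply: U_ge0 => //.
    by apply/ltW/Hu; rewrite (ltW au) (ltW ub).
  - apply: derivable_within_continuous => u; rewrite in_itv /= => /andP[au _].
    by apply: Dg; exact: lt_le_trans au.
rewrite leNgt; apply/negP => gt1.
pose A := [set s | 0 <= s <= t /\ 1 <= g s].
have A0 : A 0 by split; [rewrite lexx t0 | rewrite g0 xO].
have hsA : has_sup A.
  by split; [exists 0 | exists t => s [/andP[_ ->]]].
set s0 := sup A.
have ub := sup_upper_bound hsA.
have s00 : 0 <= s0 by exact: ub.
have s0t : s0 <= t.
  by apply: sup_le_ub; [exists 0 | move=> s [/andP[_ ->]]].
have C1 : forall s, s0 < s -> s <= t -> g s < 1.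
  move=> s s0s st; rewrite ltNge; apply/negP => g1.
  have : s <= s0 by apply: ub; split => //; rewrite st andbT; exact: (le_trans s00 (ltW s0s)).
  by rewrite leNgt s0s.
have C3 : 1 <= g s0.
  move: s00; rewrite le_eqVlt => /orP[/eqP<-|s0p]; first by rewrite g0 xO.
  rewrite leNgt; apply/negP => gs1.
  move: (Cg _ s0p) => /cvgr_lt /(_ _ gs1).
  case/nbhs_ballP => e /= e0 He.
  have [a Aa ae] := sup_adherent e0 hsA.
  have as0 : a <= s0 by exact: ub.
  have : g a < 1.
    apply: He; rewrite /ball /= ger0_norm ?subr_ge0 //.
    by rewrite ltrBlDr addrC -ltrBlDr.
  by rewrite ltNge; case: Aa => _ ->.
have s0lt : s0 < t.
  rewrite lt_neqAle s0t andbT; apply/negP => /eqP e.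
  by move: C3; rewrite e leNgt gt1.
have C2 : g s0 <= g t.
  apply: (@closed_cvg _ _ _ _ g [set y | y <= g t]) (Crg _ s00).
    exact: closed_le.
  near=> s.
  have ss0 : s0 < s by near: s; exact: nbhs_right_gt.
  have st : s < t by near: s; exact: nbhs_right_lt.
  rewrite /=; apply: Mono.
  - exact: le_lt_trans ss0.
  - exact: ltW.
  - move=> u /andP[su ut]; apply: C1 => //; exact: lt_le_trans su.
by move: (le_trans C3 C2); rewrite leNgt gt1.
Unshelve. all: by end_near.
Qed.
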